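(* Let $c \ge 1$ be an integer, let $m = 5c$, and let $f(x) = x^{5c} + x^{3c} + x^{2c} + x^{c} + 1 \in \mathbb{F}_2[x]$. There is a fixed, input-independent straight-line program using no AND operations and exactly $12c - 1 = \frac{12}{5}m - 1$ two-input XOR operations which, on input the coefficient bits $d_0,\dots,d_{2m-2}$ of an arbitrary polynomial $D(x)=\sum_{i=0}^{2m-2} d_i x^i \in \mathbb{F}_2[x]$ of degree at most $2m-2$, outputs the $m$ coefficient bits of the remainder of $D$ upon division by $f$.
   Context: A straight-line program over $\mathbb{F}_2$ here is a sequence of gates, each computing the XOR (sum in $\mathbb{F}_2$) of two values that are either input bits or outputs of earlier gates; each output bit is an input bit or a gate output. The number of XOR operations is the number of gates. *)

(* Defs.v *)
From HB Require Import structures.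
From mathcomp Require Import all_boot all_order all_algebra.
Set Implicit Arguments. Unset Strict Implicit. Unset Printing Implicit Defensive.
Import GRing.Theory.
Local Open Scope ring_scope.

(* A straight-line program over F_2 with XOR gates only.
   Wires are numbered: 0 .. nin-1 are the input bits, nin + k is the output
   of gate k.  Gate k is a pair (a, b) of wire indices, computing the XOR
   (sum in F_2) of wires a and b; well-formedness requires a, b < nin + k
   (inputs or earlier gates). *)
Record slp := SLP { slp_nin : nat; slp_gates : seq (nat * nat); slp_outs : seq nat }.

Definition slp_wf (P : slp) : bool :=
  [&& all (fun k => ((nth (0,0)%N (slp_gates P) k).1 < slp_nin P + k)%N
                && ((nth (0,0)%N (slp_gates P) k).2 < slp_nin P + k)%N)
          (iota 0 (size (slp_gates P)))
    & all (fun o => (o < slp_nin P + size (slp_gates P))%N) (slp_outs P)].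

Definition slp_xors (P : slp) : nat := size (slp_gates P).

Definition slp_wires (P : slp) (inp : seq 'F_2) : seq 'F_2 :=
  foldl (fun vals (g : nat * nat) => rcons vals (nth 0 vals g.1 + nth 0 vals g.2))
        inp (slp_gates P).

Definition slp_eval (P : slp) (inp : seq 'F_2) : seq 'F_2 :=
  map (nth 0 (slp_wires P inp)) (slp_outs P).

Definition pent (c : nat) : {poly 'F_2} :=
  'X^(5 * c) + 'X^(3 * c) + 'X^(2 * c) + 'X^c + 1.

(* Main.v *)
Require Import Defs.
From HB Require Import structures.
From mathcomp Require Import all_boot all_order all_algebra.
From mathcomp Require Import zify ring.
Import GRing.Theory.
Module MSub1.
Local Open Scope ring_scope.

Lemma two0 : (2%:R : {poly 'F_2}) = 0.
Proof. by rewrite -polyC_natr; apply/eqP; rewrite polyC_eq0. Qed.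

Definition stp (vals : seq 'F_2) (g : nat * nat) :=
  rcons vals (nth 0 vals g.1 + nth 0 vals g.2).

Lemma size_fold v gs : size (foldl stp v gs) = (size v + size gs)%N.
Proof.
elim: gs v => [|g gs IH] v /=; first by rewrite addn0.
by rewrite IH size_rcons addSnnS.
Qed.

Lemma nth_fold_pre v gs i : (i < size v)%N -> nth 0 (foldl stp v gs) i = nth 0 v i.
Proof.
elim: gs v => [|g gs IH] v //= Hi.
rewrite IH ?size_rcons 1?ltnW // nth_rcons Hi //.
Qed.

Lemma nth_fold_gate v gs k : (k < size gs)%N ->
  ((nth (0,0)%N gs k).1 < size v + k)%N -> ((nth (0,0)%N gs k).2 < size v + k)%N ->
  nth 0 (foldl stp v gs) (size v + k) =
  nth 0 (foldl stp v gs) (nth (0,0)%N gs k).1 + nth 0 (foldl stp v gs) (nth (0,0)%N gs k).2.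
Proof.
move=> Hk.
rewrite -(cat_take_drop k gs) foldl_cat.
rewrite (drop_nth (0,0)%N Hk) /= nth_cat size_take Hk ltnn subnn /=.
set w := foldl stp v (take k gs).
have Hw : size w = (size v + k)%N by rewrite /w size_fold size_take Hk.
move=> H1 H2.
rewrite !nth_fold_pre ?size_rcons ?Hw //; try lia.
rewrite nth_rcons Hw ltnn eqxx.
by rewrite !nth_rcons Hw H1 H2.
Qed.
End MSub1.
Import MSub1.
Module MSub2.


Section C.
Variable c : nat.
Definition NN := (2 * (5 * c) - 1)%N.

Definition core (w t bw : nat) : seq (nat * nat) := [::
 (5*c+t, 6*c+t); (2*c+t, w); (c+t, w); (w+2, bw)%N; (4*c+t, 6*c+t);
 (w+4, bw)%N; (3*c+t, 8*c+t); (w+6, w)%N; (t, 5*c+t); (w+8, 7*c+t); (w+9, 8*c+t)]%N.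

Definition blk t := ((7*c+t, 9*c+t)%N :: core (NN + 12 + 12*t) t (NN + 11 + 12*t))%N.

Definition gate k :=
  if (k < 11)%N then nth (0,0)%N (core NN (c-1) (7*c+(c-1))) k
  else nth (0,0)%N (blk ((k-11) %/ 12)) ((k-11) %% 12).

Definition outpos k := nth 0%N [:: 10; 3; 1; 7; 5]%N k.

Definition outw i := let k := (i %/ c)%N in let t := (i %% c)%N in
  if t == (c-1)%N then (NN + outpos k)%N else (NN + 12 + 12*t + outpos k)%N.

Definition theP := SLP NN (mkseq gate (12*c-1)) (mkseq outw (5*c)).

Lemma gate_reg t j : (j < 12)%N -> gate (11 + 12*t + j) = nth (0,0)%N (blk t) j.
Proof.
move=> Hj; rewrite /gate.
have -> : (11 + 12*t + j < 11)%N = false by lia.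
have -> : ((11 + 12*t + j - 11) %/ 12 = t)%N by lia.
have -> : ((11 + 12*t + j - 11) %% 12 = j)%N by lia.
done.
Qed.

Lemma gate_dec k : (11 <= k)%N -> k = (11 + 12 * ((k-11) %/ 12) + (k-11) %% 12)%N /\ ((k-11) %% 12 < 12)%N.
Proof. move=> H; split; lia. Qed.

Lemma wf_theP : (1 <= c)%N -> slp_wf theP.
Proof.
move=> c1; apply/andP; split.
  apply/allP => k; rewrite mem_iota add0n /= size_mkseq => Hk.
  rewrite nth_mkseq //.
  case: (ltnP k 11) => Hk11.
    rewrite /gate Hk11 /NN.
    do 11 (case: k Hk Hk11 => [|k] Hk Hk11; first by (apply/andP; simpl; split; lia)).
    by move: Hk11.
  have [E Hj] := gate_dec k Hk11.
  move: Hk; rewrite E gate_reg //.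
  move: ((k - 11) %/ 12)%N ((k - 11) %% 12)%N Hj => t j Hj Hk.
  rewrite /blk /NN.
  do 12 (case: j Hj Hk => [|j] Hj Hk; first by (apply/andP; simpl; split; lia)).
  by move: Hj.
apply/allP => o /mapP [i]; rewrite mem_iota add0n => Hi ->.
rewrite /= size_mkseq /outw /NN.
have Ht : (i %% c < c)%N by rewrite ltn_mod.
have Hk : (i %/ c < 5)%N by rewrite ltn_divLR.
case: eqP => Htc.
  move: (i %/ c)%N Hk => k Hk.
  do 5 (case: k Hk => [|k] Hk; first by (rewrite /outpos /=; lia)).
  by move: Hk.
move: (i %/ c)%N Hk (i %% c)%N Ht Htc => k Hk t Ht Htc.
do 5 (case: k Hk => [|k] Hk; first by (rewrite /outpos /=; lia)).
by move: Hk.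
Qed.
End C.
End MSub2.
Import MSub2.
Module MSub3.
Local Open Scope ring_scope.

Lemma Poly_take_drop (R : comNzRingType) n (s : seq R) :
  Poly s = Poly (take n s) + 'X^n * Poly (drop n s).
Proof.
elim: s n => [|x s IH] n /=; first by rewrite mulr0 addr0.
case: n => [|n] /=; first by rewrite mul1r add0r.
rewrite !cons_poly_def (IH n) exprS; ring.
Qed.

Definition outform (k : nat) (e : nat -> 'F_2) (vb : 'F_2) : 'F_2 :=
  match k with
  | 0 => e 0%N + e 5%N + e 7%N + e 8%N
  | 1 => e 1%N + e 5%N + e 6%N + vb
  | 2 => e 2%N + e 5%N + e 6%N
  | 3 => e 3%N + e 5%N + e 6%N + e 8%N
  | _ => e 4%N + e 6%N + vb
  end.

Lemma outform_ext k e e' vb : (forall j, (j < 9)%N -> e j = e' j) -> outform k e vb = outform k e' vb.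
Proof.
move=> H; case: k => [|[|[|[|k]]]] /=; rewrite ?H //.
Qed.

Section C.
Variable c : nat.

Lemma core_val (v : nat -> 'F_2) w t bw :
  (forall j, (j < 11)%N -> v (w + j)%N = v (nth (0,0)%N (core c w t bw) j).1 + v (nth (0,0)%N (core c w t bw) j).2) ->
  forall k, (k < 5)%N -> v (w + outpos k)%N = outform k (fun j => v (j * c + t)%N) (v bw).
Proof.
move=> H k Hk.
have H0 := H 0%N isT; have H1 := H 1%N isT; have H2 := H 2%N isT; have H3 := H 3%N isT.
have H4 := H 4%N isT; have H5 := H 5%N isT; have H6 := H 6%N isT; have H7 := H 7%N isT.
have H8 := H 8%N isT; have H9 := H 9%N isT; have H10 := H 10%N isT.
rewrite addn0 in H0.
simpl in H0, H1, H2, H3, H4, H5, H6, H7, H8, H9, H10.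
case: k Hk => [|[|[|[|[|k]]]]] //= _; rewrite ?mul0n ?add0n ?mul1n.
- rewrite H10 H9 H8; ring.
- rewrite H3 H2 H0; ring.
- rewrite H1 H0; ring.
- rewrite H7 H6 H0; ring.
- rewrite H5 H4; ring.
Qed.
End C.
End MSub3.
Import MSub3.
Module MSub4.


Section D.
Variable c : nat.
Hypothesis c1 : (1 <= c)%N.
Variable d : seq 'F_2.
Hypothesis Hd : size d = NN c.

Definition W := foldl stp d (mkseq (gate c) (12*c-1)).
Definition v x := nth 0%R W x.

Lemma W_eq : slp_wires (theP c) d = W.
Proof. by []. Qed.

Lemma v_in x : (x < NN c)%N -> v x = nth 0%R d x.
Proof. by move=> H; rewrite /v /W nth_fold_pre // Hd. Qed.

Lemma v_gate k : (k < 12*c-1)%N -> v (NN c + k) = (v (gate c k).1 + v (gate c k).2)%R.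
Proof.
move=> Hk.
have /andP[/allP Hwf _] := wf_theP c c1.
have := Hwf k; rewrite mem_iota add0n /= size_mkseq => /(_ Hk).
rewrite nth_mkseq // => /andP[Ha Hb].
rewrite /v /W -Hd nth_fold_gate ?size_mkseq ?nth_mkseq ?Hd //.
Qed.

Lemma v_special k : (k < 5)%N ->
  v (NN c + outpos k) = outform k (fun j => v (j * c + (c-1))) (v (7*c + (c-1))).
Proof.
move=> Hk; apply: (core_val c v (NN c) (c-1) (7*c+(c-1)) _ k Hk) => j Hj.
rewrite v_gate; last lia.
by rewrite /gate Hj.
Qed.

Lemma v_regular t k : (t < c - 1)%N -> (k < 5)%N ->
  v (NN c + 12 + 12*t + outpos k) = outform k (fun j => v (j * c + t)) (v (7*c+t) + v (9*c+t))%R.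
Proof.
move=> Ht Hk.
have -> : (v (7*c+t) + v (9*c+t))%R = v (NN c + 11 + 12*t).
  rewrite -addnA v_gate; last lia.
  by rewrite -(addn0 (11 + 12*t)) gate_reg.
apply: (core_val c v (NN c + 12 + 12*t) t _ _ k Hk) => j Hj.
have -> : (NN c + 12 + 12*t + j = NN c + (11 + 12*t + j.+1))%N by lia.
rewrite v_gate; last lia.
by rewrite gate_reg.
Qed.
End D.
End MSub4.
Import MSub4.
Module MSub5.
Local Open Scope ring_scope.

Lemma sizeD_le (p q : {poly 'F_2}) n : (size p <= n)%N -> (size q <= n)%N -> (size (p + q)%R <= n)%N.
Proof. move=> Hp Hq; apply: leq_trans (size_polyD _ _) _; by rewrite geq_max Hp Hq. Qed.

Section E.
Variable c : nat.
Hypothesis c1 : (1 <= c)%N.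
Variable d : seq 'F_2.
Hypothesis Hd : size d = NN c.

Definition B j := Poly (take c (drop (j*c)%N d)).

Lemma coefB j t : (t < c)%N -> (B j)`_t = nth 0 d (j*c+t)%N.
Proof. by move=> Ht; rewrite coef_Poly nth_take // nth_drop. Qed.

Lemma sizeB j : (size (B j) <= c)%N.
Proof. by apply: leq_trans (size_Poly _) _; rewrite size_take_min geq_minl. Qed.

Definition PP j := Poly (drop (j*c)%N d).

Lemma PP_step j : PP j = (B j + 'X^c * PP j.+1)%R.
Proof. by rewrite /PP /B (Poly_take_drop _ c (drop (j*c)%N d)) drop_drop mulSn addnC. Qed.

Lemma PP9 : PP 9 = B 9.
Proof.
rewrite /PP /B take_oversize // size_drop Hd /NN; lia.
Qed.

Lemma PP0 : PP 0 = Poly d.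
Proof. by rewrite /PP mul0n drop0. Qed.

Definition R0 := B 0 + B 5 + B 7 + B 8.
Definition R1 := B 1 + B 5 + B 6 + B 7 + B 9.
Definition R2 := B 2 + B 5 + B 6.
Definition R3 := B 3 + B 5 + B 6 + B 8.
Definition R4 := B 4 + B 6 + B 7 + B 9.
Definition yy : {poly 'F_2} := 'X^c.
Definition RR := R0 + R1 * yy + R2 * yy^+2 + R3 * yy^+3 + R4 * yy^+4.

Lemma pent_y : pent c = yy^+5 + yy^+3 + yy^+2 + yy + 1.
Proof. by rewrite /pent /yy -!exprM !(mulnC c). Qed.

Lemma Poly_id : Poly d = RR + (B 5 + B 6 * yy + B 7 * (yy^+2 + 1) + B 8 * (yy^+3 + yy + 1)
   + B 9 * (yy^+4 + yy^+2 + yy)) * pent c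
  + 2%:R * (
    - B 5 * (1 + yy + yy^+2 + yy^+3)
    - B 6 * (yy + yy^+2 + yy^+3 + yy^+4)
    - B 7 * (1 + yy + yy^+2 + yy^+3 + yy^+4 + yy^+5)
    - B 8 * (1 + yy + yy^+2 + 2%:R * yy^+3 + yy^+4 + yy^+5 + yy^+6)
    - B 9 * (yy + yy^+2 + yy^+3 + 2%:R * yy^+4 + yy^+5 + yy^+6 + yy^+7)).
Proof.
rewrite -PP0; do 9 rewrite PP_step; rewrite PP9 pent_y /RR /R0 /R1 /R2 /R3 /R4 -/yy.
ring.
Qed.

Lemma sizeR k : (size (match k with 0 => R0 | 1 => R1 | 2 => R2 | 3 => R3 | _ => R4 end) <= c)%N.
Proof.
case: k => [|[|[|[|k]]]]; rewrite /R0 /R1 /R2 /R3 /R4; by repeat apply: sizeD_le; apply: sizeB.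
Qed.

Lemma coef_blk (p : {poly 'F_2}) k k' t : (size p <= c)%N -> (t < c)%N ->
  (p * yy^+k')`_(k*c+t)%N = if k == k' then p`_t else 0.
Proof.
move=> Hp Ht; rewrite /yy -exprM coefMXn.
case: (ltngtP k k') => H.
- have -> : (k * c + t < c * k')%N by nia.
  done.
- have -> : (k * c + t < c * k')%N = false by nia.
  apply: nth_default; apply: leq_trans Hp _; nia.
- subst k'; have -> : (k * c + t < c * k)%N = false by nia.
  by congr (_`_ _); nia.
Qed.

Lemma coef_blk_hi (p : {poly 'F_2}) k' j : (size p <= c)%N -> (k' * c + c <= j)%N ->
  (p * yy^+k')`_j = 0.
Proof.
move=> Hp Hj; rewrite /yy -exprM coefMXn.
have -> : (j < c * k')%N = false by nia.
apply: nth_default; apply: leq_trans Hp _; nia.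
Qed.

Lemma five_hi (p0 p1 p2 p3 p4 : {poly 'F_2}) j :
  (size p0 <= c)%N -> (size p1 <= c)%N -> (size p2 <= c)%N -> (size p3 <= c)%N -> (size p4 <= c)%N ->
  (5 * c <= j)%N -> (p0 + p1 * yy^+1 + p2 * yy^+2 + p3 * yy^+3 + p4 * yy^+4)`_j = 0.
Proof.
move=> H0 H1 H2 H3 H4 Hj.
rewrite !coefD (coef_blk_hi p1 1) ?(coef_blk_hi p2 2) ?(coef_blk_hi p3 3) ?(coef_blk_hi p4 4) //; try lia.
rewrite nth_default ?addr0 //; apply: leq_trans H0 _; apply: leq_trans _ Hj; by rewrite leq_pmull.
Qed.

Lemma five_coef (p0 p1 p2 p3 p4 : {poly 'F_2}) k t :
  (size p0 <= c)%N -> (size p1 <= c)%N -> (size p2 <= c)%N -> (size p3 <= c)%N -> (size p4 <= c)%N ->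
  (k < 5)%N -> (t < c)%N ->
  (p0 + p1 * yy^+1 + p2 * yy^+2 + p3 * yy^+3 + p4 * yy^+4)`_(k * c + t)%N =
  (match k with 0 => p0 | 1 => p1 | 2 => p2 | 3 => p3 | _ => p4 end)`_t.
Proof.
move=> H0 H1 H2 H3 H4 Hk Ht.
have E0 : p0`_(k * c + t)%N = if k == 0%N then p0`_t else 0.
  have := coef_blk p0 k 0 t H0 Ht; by rewrite expr0 mulr1.
rewrite !coefD E0 (coef_blk p1) ?(coef_blk p2) ?(coef_blk p3) ?(coef_blk p4) //.
case: k Hk {E0} => [|[|[|[|[|k]]]]] //= _; rewrite ?addr0 ?add0r //.
Qed.

Lemma size_RR : (size RR <= 5 * c)%N.
Proof.
apply/leq_sizeP => j Hj; apply: five_hi => //; solve [exact: (sizeR 0) | exact: (sizeR 1) | exact: (sizeR 2) | exact: (sizeR 3) | exact: (sizeR 4)].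
Qed.

Lemma size_pent : (5 * c < size (pent c))%N.
Proof.
rewrite ltnNge; apply/negP => H.
have : (pent c)`_(5 * c)%N = 0 by apply: nth_default.
rewrite /pent !coefD !coefXn coefC eqxx.
have -> : (5 * c == 3 * c)%N = false by apply/eqP; lia.
have -> : (5 * c == 2 * c)%N = false by apply/eqP; lia.
have -> : (5 * c == c)%N = false by apply/eqP; lia.
have -> : (5 * c == 0)%N = false by apply/eqP; lia.
by [].
Qed.

Lemma mod_eq : Poly d %% pent c = RR.
Proof.
rewrite Poly_id.
have -> : (2%:R : {poly 'F_2}) = 0 by rewrite -polyC_natr; apply/eqP; rewrite polyC_eq0.
rewrite mul0r addr0 modpD modp_mull addr0 modp_small //.
exact: leq_ltn_trans size_RR size_pent.
Qed.

Lemma coef_RR k t : (k < 5)%N -> (t < c)%N ->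
  RR`_(k * c + t)%N = (match k with 0 => R0 | 1 => R1 | 2 => R2 | 3 => R3 | _ => R4 end)`_t.
Proof.
move=> Hk Ht; apply: five_coef => //; solve [exact: (sizeR 0) | exact: (sizeR 1) | exact: (sizeR 2) | exact: (sizeR 3) | exact: (sizeR 4)].
Qed.

Lemma coefR k t : (k < 5)%N -> (t < c)%N ->
  (match k with 0 => R0 | 1 => R1 | 2 => R2 | 3 => R3 | _ => R4 end)`_t =
  outform k (fun j => nth 0 d (j * c + t)%N) (nth 0 d (7 * c + t)%N + nth 0 d (9 * c + t)%N).
Proof.
move=> Hk Ht.
case: k Hk => [|[|[|[|[|k]]]]] //= _; rewrite /R0 /R1 /R2 /R3 /R4 !coefD !coefB // ?mul0n ?mul1n ?add0n; ring.
Qed.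
End E.
End MSub5.
Import MSub5.
Local Open Scope ring_scope.

Theorem mainTheorem3 (c : nat) : (1 <= c)%N ->
  exists P : slp,
    [/\ slp_wf P,
        slp_nin P = (2 * (5 * c) - 1)%N,
        slp_xors P = (12 * c - 1)%N,
        size (slp_outs P) = (5 * c)%N
      & forall d : seq 'F_2, size d = (2 * (5 * c) - 1)%N ->
          forall i : nat, (i < 5 * c)%N ->
            nth 0 (slp_eval P d) i = (Poly d %% pent c)`_i].
Proof.
move=> c1; exists (theP c); split.
- exact: wf_theP.
- by [].
- by rewrite /slp_xors size_mkseq.
- by rewrite size_mkseq.
move=> d Hd i Hi.
rewrite /slp_eval (nth_map 0%N) ?size_mkseq // nth_mkseq // W_eq (mod_eq _ c1 _ Hd).
have Ht : (i %% c < c)%N by rewrite ltn_mod.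
have Hk : (i %/ c < 5)%N by rewrite ltn_divLR.
rewrite {2}(divn_eq i c) coef_RR // coefR // /outw.
move: (i %/ c)%N (i %% c)%N Hk Ht => k t Hk Ht.
case: eqP => Htc.
  subst t.
  rewrite -/(v c d (NN c + outpos k)%N); rewrite (v_special _ c1 _ Hd) //.
  rewrite [nth 0 d (9 * c + (c - 1))%N]nth_default ?addr0; last by rewrite Hd /NN; lia.
  rewrite (v_in _ _ Hd); last by rewrite /NN; lia.
  apply: outform_ext => j Hj; rewrite (v_in _ _ Hd) // /NN; nia.
rewrite -/(v c d (NN c + 12 + 12 * t + outpos k)%N); rewrite (v_regular _ c1 _ Hd) //; last lia.
rewrite (v_in _ _ Hd); last by rewrite /NN; lia.
rewrite (v_in _ _ Hd); last by rewrite /NN; lia.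
apply: outform_ext => j Hj; rewrite (v_in _ _ Hd) // /NN; nia.
Qed.
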